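(* Let $s\in\{0,\pm1,\pm2\}$ and let $\psi_s$ be a smooth spin-weight-$s$ solution of the Teukolsky master equation on the Kerr exterior $r>r_+$. Set $\Psi_s=\sqrt{r^2+a^2}\,\psi_s$ and $\Phi^{(0)}_s=\mu^{-s}\Psi_s$. Then $$\widehat\Box_s\Phi_s^{(0)}=\frac{2s(r^3-3Mr^2+a^2r+a^2M)}{(r^2+a^2)^2}\hat{\mathcal V}\Phi_s^{(0)}-\frac{2(2s+1)ar}{r^2+a^2}\mathcal{L}_\eta\Phi_s^{(0)}-\Big(2s-\frac{(2s+1)\big(2(s+1)Mr^3+a^2r^2-2(s+2)a^2Mr+a^4\big)}{(r^2+a^2)^2}\Big)\Phi_s^{(0)}.$$
   Context: Fix $M>0$, $|a|<M$; Boyer–Lindquist coordinates $(t,r,\theta,\phi)$, $\Delta=r^2-2Mr+a^2$, $r_+=M+\sqrt{M^2-a^2}$, $\mu=\Delta/(r^2+a^2)$. Vector fields: $Y=\frac{(r^2+a^2)\partial_t+a\partial_\phi}{\Delta}-\partial_r$, $V=\frac{(r^2+a^2)\partial_t+a\partial_\phi}{r^2+a^2}+\mu\partial_r$, $\hat V=\mu^{-1}V$, $\hat{\mathcal V}=(r^2+a^2)\hat V$, $\mathcal{L}_\xi=\partial_t$, $\mathcal{L}_\eta=\partial_\phi$. For a complex function $\varphi$ of spin weight $s$: $\mathring{\eth}\varphi=\partial_\theta\varphi+i\csc\theta\partial_\phi\varphi-s\cot\theta\varphi$, $\mathring{\eth}'\varphi=\partial_\theta\varphi-i\csc\theta\partial_\phi\varphi+s\cot\theta\varphi$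 (here $\mathring{\eth}'$ acts with weight $s$ and $\mathring{\eth}$ with weight $s-1$ in $\mathring{\eth}\mathring{\eth}'$). Spin-weighted wave operator $\widehat\Box_s=-(r^2+a^2)YV+\mathring{\eth}\mathring{\eth}'+2a\mathcal{L}_\xi\mathcal{L}_\eta+a^2\sin^2\theta\mathcal{L}_\xi^2-2ias\cos\theta\mathcal{L}_\xi$. Teukolsky master equation, with $\Sigma=r^2+a^2\cos^2\theta$: $0=-\frac{(r^2+a^2)^2-a^2\sin^2\theta\Delta}{\Delta}\partial_t^2\psi_s+\partial_r(\Delta\partial_r\psi_s)-\frac{4aMr}{\Delta}\partial_t\partial_\phi\psi_s-\frac{a^2}{\Delta}\partial_\phi^2\psi_s+\mathring{\eth}\mathring{\eth}'\psi_s-2ias\cos\theta\partial_t\psi_s+2s[(r-M)Y-2r\partial_t]\psi_s$. *)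

(* Defs.v *)
From Stdlib Require Import Reals ZArith List.
From Coquelicot Require Import Coquelicot.
Open Scope R_scope.

Definition Delta (M a r : R) : R := r ^ 2 - 2 * M * r + a ^ 2.
Definition rplus (M a : R) : R := M + sqrt (M ^ 2 - a ^ 2).
Definition mu (M a r : R) : R := Delta M a r / (r ^ 2 + a ^ 2).

(** Complex-valued functions of Boyer-Lindquist coordinates (t, r, theta, phi). *)
Definition F4 := R -> R -> R -> R -> C.

Definition sc (x : R) (z : C) : C := Cmult (RtoC x) z.
Definition Ci : C := (0, 1).

Definition CD (g : R -> C) (x : R) : C :=
  (Derive (fun y => fst (g y)) x, Derive (fun y => snd (g y)) x).

Definition dt  (f : F4) : F4 := fun t r th ph => CD (fun x => f x r th ph) t.
Definition dr  (f : F4) : F4 := fun t r th ph => CD (fun x => f t x th ph) r.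
Definition dth (f : F4) : F4 := fun t r th ph => CD (fun x => f t r x ph) th.
Definition dph (f : F4) : F4 := fun t r th ph => CD (fun x => f t r th x) ph.

Definition exterior (M a r th : R) : Prop := rplus M a < r /\ 0 < th < PI.

Definition pdk (k : nat) (f : F4) : F4 :=
  match k with 0 => dt f | 1 => dr f | 2 => dth f | _ => dph f end.
Definition iter_pd (l : list nat) (f : F4) : F4 := fold_right pdk f l.

Definition ex_pd (k : nat) (g : R -> R -> R -> R -> R) (t r th ph : R) : Prop :=
  match k with
  | 0 => ex_derive (fun x => g x r th ph) t
  | 1 => ex_derive (fun x => g t x th ph) r
  | 2 => ex_derive (fun x => g t r x ph) th
  | _ => ex_derive (fun x => g t r th x) ph
  end.

Definition cont4 (g : R -> R -> R -> R -> R) (t r th ph : R) : Prop :=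
  continuous (fun q : R * R * R * R =>
                g (fst (fst (fst q))) (snd (fst (fst q))) (snd (fst q)) (snd q))
             (t, r, th, ph).

Definition smooth_ext (M a : R) (f : F4) : Prop :=
  forall (l : list nat) (t r th ph : R), exterior M a r th ->
    let g := iter_pd l f in
    cont4 (fun t r th ph => fst (g t r th ph)) t r th ph /\
    cont4 (fun t r th ph => snd (g t r th ph)) t r th ph /\
    forall k : nat, (k < 4)%nat ->
      ex_pd k (fun t r th ph => fst (g t r th ph)) t r th ph /\
      ex_pd k (fun t r th ph => snd (g t r th ph)) t r th ph.

Definition Yop (M a : R) (f : F4) : F4 := fun t r th ph =>
  Cminus (sc (/ Delta M a r) (Cplus (sc (r ^ 2 + a ^ 2) (dt f t r th ph)) (sc a (dph f t r th ph))))
         (dr f t r th ph).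
Definition Vop (M a : R) (f : F4) : F4 := fun t r th ph =>
  Cplus (sc (/ (r ^ 2 + a ^ 2)) (Cplus (sc (r ^ 2 + a ^ 2) (dt f t r th ph)) (sc a (dph f t r th ph))))
        (sc (mu M a r) (dr f t r th ph)).
Definition Vhat (M a : R) (f : F4) : F4 := fun t r th ph =>
  sc (/ mu M a r) (Vop M a f t r th ph).
Definition calVhat (M a : R) (f : F4) : F4 := fun t r th ph =>
  sc (r ^ 2 + a ^ 2) (Vhat M a f t r th ph).

Definition eth (s : R) (f : F4) : F4 := fun t r th ph =>
  Cminus (Cplus (dth f t r th ph) (Cmult Ci (sc (/ sin th) (dph f t r th ph))))
         (sc (s * (cos th / sin th)) (f t r th ph)).
Definition eth' (s : R) (f : F4) : F4 := fun t r th ph =>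
  Cplus (Cminus (dth f t r th ph) (Cmult Ci (sc (/ sin th) (dph f t r th ph))))
        (sc (s * (cos th / sin th)) (f t r th ph)).
Definition ethethp (s : R) (f : F4) : F4 := eth (s - 1) (eth' s f).

Definition Box_s (M a s : R) (f : F4) : F4 := fun t r th ph =>
  Cminus
   (Cplus (Cplus (Cplus
     (Copp (sc (r ^ 2 + a ^ 2) (Yop M a (Vop M a f) t r th ph)))
     (ethethp s f t r th ph))
     (sc (2 * a) (dt (dph f) t r th ph)))
     (sc (a ^ 2 * sin th ^ 2) (dt (dt f) t r th ph)))
   (Cmult Ci (sc (2 * a * s * cos th) (dt f t r th ph))).

Definition teukolsky_at (M a s : R) (psi : F4) (t r th ph : R) : Prop :=
  let D := Delta M a r in
  Cplus (Cminus (Cplus (Cminus (Cminus (Cplus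
    (sc (- (((r ^ 2 + a ^ 2) ^ 2 - a ^ 2 * sin th ^ 2 * D) / D)) (dt (dt psi) t r th ph))
    (dr (fun t' r' th' ph' => sc (Delta M a r') (dr psi t' r' th' ph')) t r th ph))
    (sc (4 * a * M * r / D) (dt (dph psi) t r th ph)))
    (sc (a ^ 2 / D) (dph (dph psi) t r th ph)))
    (ethethp s psi t r th ph))
    (Cmult Ci (sc (2 * a * s * cos th) (dt psi t r th ph))))
    (sc (2 * s) (Cminus (sc (r - M) (Yop M a psi t r th ph)) (sc (2 * r) (dt psi t r th ph))))
  = RtoC 0.

Definition Phi0 (M a : R) (s : Z) (psi : F4) : F4 := fun t r th ph =>
  sc (powerRZ (mu M a r) (- s) * sqrt (r ^ 2 + a ^ 2)) (psi t r th ph).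

(* Main.v *)
Require Import Defs.
From Stdlib Require Import Reals ZArith List Lia Lra.
From Coquelicot Require Import Coquelicot.
Import Defs.
Open Scope R_scope.

Definition exC (g : R -> C) (x : R) : Prop :=
  ex_derive (fun y => fst (g y)) x /\ ex_derive (fun y => snd (g y)) x.

Lemma CD_ext_loc (g1 g2 : R -> C) x :
  locally x (fun y => g1 y = g2 y) -> CD g1 x = CD g2 x.
Proof.
  intros H. unfold CD. f_equal; apply Derive_ext_loc;
  (apply (filter_imp (fun y => g1 y = g2 y)); [intros y Hy; rewrite Hy; reflexivity | exact H]).
Qed.

Lemma CD_ext (g1 g2 : R -> C) x :
  (forall y, g1 y = g2 y) -> CD g1 x = CD g2 x.
Proof.
  intros H. apply CD_ext_loc. apply filter_forall. exact H.
Qed.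

Lemma CD_sc (k : R) (g : R -> C) x :
  CD (fun y => sc k (g y)) x = sc k (CD g x).
Proof.
  unfold CD, sc, Cmult, RtoC; simpl.
  rewrite (Derive_ext (fun y => k * fst (g y) - 0 * snd (g y)) (fun y => k * fst (g y)))
    by (intros; ring).
  rewrite (Derive_ext (fun y => k * snd (g y) + 0 * fst (g y)) (fun y => k * snd (g y)))
    by (intros; ring).
  rewrite !Derive_scal. f_equal; ring.
Qed.

Lemma CD_scv (k : R -> R) (g : R -> C) x :
  ex_derive k x -> exC g x ->
  CD (fun y => sc (k y) (g y)) x = Cplus (sc (Derive k x) (g x)) (sc (k x) (CD g x)).
Proof.
  intros Hk [H1 H2].
  unfold CD, sc, Cmult, Cplus, RtoC; simpl.
  rewrite (Derive_ext (fun y => k y * fst (g y) - 0 * snd (g y)) (fun y => k y * fst (g y)))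
    by (intros; ring).
  rewrite (Derive_ext (fun y => k y * snd (g y) + 0 * fst (g y)) (fun y => k y * snd (g y)))
    by (intros; ring).
  rewrite !Derive_mult by assumption. f_equal; ring.
Qed.

Lemma CD_plus (g1 g2 : R -> C) x :
  exC g1 x -> exC g2 x ->
  CD (fun y => Cplus (g1 y) (g2 y)) x = Cplus (CD g1 x) (CD g2 x).
Proof.
  intros [H1 H2] [H3 H4]. unfold CD, Cplus; simpl.
  rewrite (Derive_plus (fun y => fst (g1 y)) (fun y => fst (g2 y))) by assumption.
  rewrite (Derive_plus (fun y => snd (g1 y)) (fun y => snd (g2 y))) by assumption.
  reflexivity.
Qed.

Lemma exC_plus (g1 g2 : R -> C) x :
  exC g1 x -> exC g2 x -> exC (fun y => Cplus (g1 y) (g2 y)) x.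
Proof.
  intros [H1 H2] [H3 H4]. unfold Cplus; split; simpl.
  - apply (ex_derive_plus (fun y => fst (g1 y)) (fun y => fst (g2 y))); assumption.
  - apply (ex_derive_plus (fun y => snd (g1 y)) (fun y => snd (g2 y))); assumption.
Qed.

Lemma exC_sc (k : R) (g : R -> C) x : exC g x -> exC (fun y => sc k (g y)) x.
Proof.
  intros [H1 H2]. unfold sc, Cmult, RtoC; split; simpl.
  - apply (ex_derive_minus (fun y => k * fst (g y)) (fun y => 0 * snd (g y)));
    apply ex_derive_scal; assumption.
  - apply (ex_derive_plus (fun y => k * snd (g y)) (fun y => 0 * fst (g y)));
    apply ex_derive_scal; assumption.
Qed.

Definition NF4 (k1 k2 k3 k4 : R) (A B Cc D : C) : C :=
  Cplus (sc k1 A) (Cplus (sc k2 B) (Cplus (sc k3 Cc) (sc k4 D))).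

Lemma CD_NF4c k1 k2 k3 k4 (A B Cc D : R -> C) x :
  exC A x -> exC B x -> exC Cc x -> exC D x ->
  CD (fun y => NF4 k1 k2 k3 k4 (A y) (B y) (Cc y) (D y)) x =
  NF4 k1 k2 k3 k4 (CD A x) (CD B x) (CD Cc x) (CD D x).
Proof.
  intros HA HB HC HD. unfold NF4.
  assert (E1 : exC (fun y => sc k1 (A y)) x) by (apply exC_sc; exact HA).
  assert (E2 : exC (fun y => sc k2 (B y)) x) by (apply exC_sc; exact HB).
  assert (E3 : exC (fun y => sc k3 (Cc y)) x) by (apply exC_sc; exact HC).
  assert (E4 : exC (fun y => sc k4 (D y)) x) by (apply exC_sc; exact HD).
  assert (E34 := exC_plus _ _ _ E3 E4).
  assert (E234 := exC_plus _ _ _ E2 E34).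
  rewrite (CD_plus _ _ _ E1 E234).
  rewrite (CD_plus _ _ _ E2 E34).
  rewrite (CD_plus _ _ _ E3 E4).
  rewrite !CD_sc. reflexivity.
Qed.
Lemma ext_pos (M a r th : R) : 0 < M -> Rabs a < M -> exterior M a r th ->
  0 < Delta M a r /\ 0 < r ^ 2 + a ^ 2 /\ 0 < r.
Proof.
  intros hM ha [hr _]. unfold rplus in hr. unfold Delta.
  assert (h0 : 0 <= M ^ 2 - a ^ 2).
  { destruct (Rabs_def2 a M ha). nra. }
  assert (hq := sqrt_sqrt _ h0). assert (hq0 := sqrt_pos (M ^ 2 - a ^ 2)).
  set (q := sqrt (M ^ 2 - a ^ 2)) in *.
  assert (0 < r) by lra.
  split; [| split]; nra.
Qed.

Definition gf (M a S r : R) := - S * (2 * r - 2 * M) / Delta M a r + (2 * S + 1) * r / (r ^ 2 + a ^ 2).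
Definition cf (M a : R) (s : Z) (r : R) := powerRZ (mu M a r) (- s) * sqrt (r ^ 2 + a ^ 2).

Lemma sqrt_der (a r : R) : 0 < r ^ 2 + a ^ 2 ->
  is_derive (fun r => sqrt (r ^ 2 + a ^ 2)) r (sqrt (r ^ 2 + a ^ 2) * (r / (r ^ 2 + a ^ 2))).
Proof.
  intros hL. auto_derive.
  - simpl in *; lra.
  - assert (hq := sqrt_sqrt _ (Rlt_le _ _ hL)).
    assert (hq0 := sqrt_lt_R0 _ hL).
    replace (r * (r * 1) + a * (a * 1)) with (r ^ 2 + a ^ 2) by ring.
    set (q := sqrt (r ^ 2 + a ^ 2)) in *. rewrite <- hq. field. lra.
Qed.

Lemma pow_der (M a : R) (s : Z) (r : R) : (-2 <= s <= 2)%Z -> 0 < Delta M a r -> 0 < r ^ 2 + a ^ 2 ->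
  is_derive (fun r => powerRZ (mu M a r) (- s)) r
    (powerRZ (mu M a r) (- s) * (- IZR s * ((2 * r - 2 * M) / Delta M a r - 2 * r / (r ^ 2 + a ^ 2)))).
Proof.
  intros hs hD hL.
  assert (hs' : s = (-2)%Z \/ s = (-1)%Z \/ s = 0%Z \/ s = 1%Z \/ s = 2%Z) by lia.
  unfold mu, Delta in *.
  destruct hs' as [-> | [-> | [-> | [-> | ->]]]]; simpl;
  auto_derive; repeat split; try (simpl; lra);
  try (field; simpl; lra);
  repeat apply Rmult_integral_contrapositive_currified; try apply Rinv_neq_0_compat; simpl; lra.
Qed.

Lemma is_derive_eq (f : R -> R) x l l' : is_derive f x l -> l = l' -> is_derive f x l'.
Proof. intros H E; subst; exact H. Qed.

Lemma c_der (M a : R) (s : Z) (r : R) : (-2 <= s <= 2)%Z -> 0 < Delta M a r -> 0 < r ^ 2 + a ^ 2 ->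
  is_derive (cf M a s) r (cf M a s r * gf M a (IZR s) r).
Proof.
  intros hs hD hL.
  assert (H := is_derive_mult _ _ _ _ _ (pow_der M a s r hs hD hL) (sqrt_der a r hL) Rmult_comm).
  unfold cf. apply (is_derive_eq _ _ _ _ H).
  unfold plus, mult; simpl. unfold gf. field. lra.
Qed.
Section Sm.
Variables (M a : R) (psi : F4) (hsm : smooth_ext M a psi).

Lemma sm_t l t r th ph : exterior M a r th -> exC (fun x => iter_pd l psi x r th ph) t.
Proof.
  intros He. destruct (hsm l t r th ph He) as [_ [_ Hk]].
  destruct (Hk 0%nat ltac:(lia)) as [H1 H2]. split; [exact H1 | exact H2].
Qed.
Lemma sm_r l t r th ph : exterior M a r th -> exC (fun x => iter_pd l psi t x th ph) r.
Proof.
  intros He. destruct (hsm l t r th ph He) as [_ [_ Hk]].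
  destruct (Hk 1%nat ltac:(lia)) as [H1 H2]. split; [exact H1 | exact H2].
Qed.
Lemma sm_ph l t r th ph : exterior M a r th -> exC (fun x => iter_pd l psi t r th x) ph.
Proof.
  intros He. destruct (hsm l t r th ph He) as [_ [_ Hk]].
  destruct (Hk 3%nat ltac:(lia)) as [H1 H2]. split; [exact H1 | exact H2].
Qed.
End Sm.

Lemma cont_restr {T : UniformSpace} (Gq : T -> R) (q0 : T) (e : R -> R -> T) x y :
  continuous Gq q0 -> e x y = q0 ->
  (forall (d : posreal) u v, Rabs (u - x) < d -> Rabs (v - y) < d -> ball q0 d (e u v)) ->
  continuity_2d_pt (fun u v => Gq (e u v)) x y.
Proof.
  intros Hc He Hb eps.
  destruct (proj1 (filterlim_locally _ _) Hc eps) as [d Hd].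
  exists d. intros u v Hu Hv. rewrite He. exact (Hd _ (Hb d u v Hu Hv)).
Qed.

Lemma ball_R (x y : R) (d : R) : Rabs (y - x) < d -> ball x d y.
Proof. intros H; exact H. Qed.

Lemma ext_loc2_r M a r th : exterior M a r th ->
  exists d : posreal, forall r', Rabs (r' - r) < d -> exterior M a r' th.
Proof.
  intros [hr hth].
  assert (hd : 0 < r - rplus M a) by lra.
  exists (mkposreal _ hd). simpl. intros r' Hr'. split; [| exact hth].
  destruct (Rabs_def2 _ _ Hr'). lra.
Qed.

Ltac ballt := intros d u v Hu Hv; split; [split; [split|]|]; try apply ball_center; assumption.

Section Schw.
Variables (M a : R) (psi : F4) (hsm : smooth_ext M a psi).

Lemma schw_tph t r th ph : exterior M a r th ->
  dt (dph psi) t r th ph = dph (dt psi) t r th ph.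
Proof.
  intros He. unfold dt, dph, CD; simpl. f_equal.
  - apply (Schwarz (fun u v => fst (psi u r th v)) t ph).
    + apply locally_2d_forall. intros u v.
      split; [exact (proj1 (sm_t M a psi hsm nil u r th v He)) |].
      split; [exact (proj1 (sm_ph M a psi hsm nil u r th v He)) |].
      split; [exact (proj1 (sm_t M a psi hsm (3%nat :: nil) u r th v He)) |].
      exact (proj1 (sm_ph M a psi hsm (0%nat :: nil) u r th v He)).
    + refine (cont_restr (fun q => fst (iter_pd (0%nat :: 3%nat :: nil) psi (fst (fst (fst q))) (snd (fst (fst q))) (snd (fst q)) (snd q)))
         (t, r, th, ph) (fun u v => (u, r, th, v)) t ph _ eq_refl _).
      * exact (proj1 (hsm (0%nat :: 3%nat :: nil) t r th ph He)).
      * ballt.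
    + refine (cont_restr (fun q => fst (iter_pd (3%nat :: 0%nat :: nil) psi (fst (fst (fst q))) (snd (fst (fst q))) (snd (fst q)) (snd q)))
         (t, r, th, ph) (fun u v => (u, r, th, v)) t ph _ eq_refl _).
      * exact (proj1 (hsm (3%nat :: 0%nat :: nil) t r th ph He)).
      * ballt.
  - apply (Schwarz (fun u v => snd (psi u r th v)) t ph).
    + apply locally_2d_forall. intros u v.
      split; [exact (proj2 (sm_t M a psi hsm nil u r th v He)) |].
      split; [exact (proj2 (sm_ph M a psi hsm nil u r th v He)) |].
      split; [exact (proj2 (sm_t M a psi hsm (3%nat :: nil) u r th v He)) |].
      exact (proj2 (sm_ph M a psi hsm (0%nat :: nil) u r th v He)).
    + refine (cont_restr (fun q => snd (iter_pd (0%nat :: 3%nat :: nil) psi (fst (fst (fst q))) (snd (fst (fst q))) (snd (fst q)) (snd q)))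
         (t, r, th, ph) (fun u v => (u, r, th, v)) t ph _ eq_refl _).
      * exact (proj1 (proj2 (hsm (0%nat :: 3%nat :: nil) t r th ph He))).
      * ballt.
    + refine (cont_restr (fun q => snd (iter_pd (3%nat :: 0%nat :: nil) psi (fst (fst (fst q))) (snd (fst (fst q))) (snd (fst q)) (snd q)))
         (t, r, th, ph) (fun u v => (u, r, th, v)) t ph _ eq_refl _).
      * exact (proj1 (proj2 (hsm (3%nat :: 0%nat :: nil) t r th ph He))).
      * ballt.
Qed.

Lemma schw_tr t r th ph : exterior M a r th ->
  dt (dr psi) t r th ph = dr (dt psi) t r th ph.
Proof.
  intros He. unfold dt, dr, dph, CD; simpl. f_equal.
  - apply (Schwarz (fun u v => fst (psi u v th ph)) t r).
    + destruct (ext_loc2_r M a r th He) as [d Hd]. exists d. intros u v Hu Hv. pose proof (Hd v Hv) as He'.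
      split; [exact (proj1 (sm_t M a psi hsm nil u v th ph He')) |].
      split; [exact (proj1 (sm_r M a psi hsm nil u v th ph He')) |].
      split; [exact (proj1 (sm_t M a psi hsm (1%nat :: nil) u v th ph He')) |].
      exact (proj1 (sm_r M a psi hsm (0%nat :: nil) u v th ph He')).
    + refine (cont_restr (fun q => fst (iter_pd (0%nat :: 1%nat :: nil) psi (fst (fst (fst q))) (snd (fst (fst q))) (snd (fst q)) (snd q)))
         (t, r, th, ph) (fun u v => (u, v, th, ph)) t r _ eq_refl _).
      * exact (proj1 (hsm (0%nat :: 1%nat :: nil) t r th ph He)).
      * ballt.
    + refine (cont_restr (fun q => fst (iter_pd (1%nat :: 0%nat :: nil) psi (fst (fst (fst q))) (snd (fst (fst q))) (snd (fst q)) (snd q)))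
         (t, r, th, ph) (fun u v => (u, v, th, ph)) t r _ eq_refl _).
      * exact (proj1 (hsm (1%nat :: 0%nat :: nil) t r th ph He)).
      * ballt.
  - apply (Schwarz (fun u v => snd (psi u v th ph)) t r).
    + destruct (ext_loc2_r M a r th He) as [d Hd]. exists d. intros u v Hu Hv. pose proof (Hd v Hv) as He'.
      split; [exact (proj2 (sm_t M a psi hsm nil u v th ph He')) |].
      split; [exact (proj2 (sm_r M a psi hsm nil u v th ph He')) |].
      split; [exact (proj2 (sm_t M a psi hsm (1%nat :: nil) u v th ph He')) |].
      exact (proj2 (sm_r M a psi hsm (0%nat :: nil) u v th ph He')).
    + refine (cont_restr (fun q => snd (iter_pd (0%nat :: 1%nat :: nil) psi (fst (fst (fst q))) (snd (fst (fst q))) (snd (fst q)) (snd q)))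
         (t, r, th, ph) (fun u v => (u, v, th, ph)) t r _ eq_refl _).
      * exact ((fun h => proj1 (proj2 h)) (hsm (0%nat :: 1%nat :: nil) t r th ph He)).
      * ballt.
    + refine (cont_restr (fun q => snd (iter_pd (1%nat :: 0%nat :: nil) psi (fst (fst (fst q))) (snd (fst (fst q))) (snd (fst q)) (snd q)))
         (t, r, th, ph) (fun u v => (u, v, th, ph)) t r _ eq_refl _).
      * exact ((fun h => proj1 (proj2 h)) (hsm (1%nat :: 0%nat :: nil) t r th ph He)).
      * ballt.
Qed.

Lemma schw_rph t r th ph : exterior M a r th ->
  dr (dph psi) t r th ph = dph (dr psi) t r th ph.
Proof.
  intros He. unfold dt, dr, dph, CD; simpl. f_equal.
  - apply (Schwarz (fun u v => fst (psi t u th v)) r ph).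
    + destruct (ext_loc2_r M a r th He) as [d Hd]. exists d. intros u v Hu Hv. pose proof (Hd u Hu) as He'.
      split; [exact (proj1 (sm_r M a psi hsm nil t u th v He')) |].
      split; [exact (proj1 (sm_ph M a psi hsm nil t u th v He')) |].
      split; [exact (proj1 (sm_r M a psi hsm (3%nat :: nil) t u th v He')) |].
      exact (proj1 (sm_ph M a psi hsm (1%nat :: nil) t u th v He')).
    + refine (cont_restr (fun q => fst (iter_pd (1%nat :: 3%nat :: nil) psi (fst (fst (fst q))) (snd (fst (fst q))) (snd (fst q)) (snd q)))
         (t, r, th, ph) (fun u v => (t, u, th, v)) r ph _ eq_refl _).
      * exact (proj1 (hsm (1%nat :: 3%nat :: nil) t r th ph He)).
      * ballt.
    + refine (cont_restr (fun q => fst (iter_pd (3%nat :: 1%nat :: nil) psi (fst (fst (fst q))) (snd (fst (fst q))) (snd (fst q)) (snd q)))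
         (t, r, th, ph) (fun u v => (t, u, th, v)) r ph _ eq_refl _).
      * exact (proj1 (hsm (3%nat :: 1%nat :: nil) t r th ph He)).
      * ballt.
  - apply (Schwarz (fun u v => snd (psi t u th v)) r ph).
    + destruct (ext_loc2_r M a r th He) as [d Hd]. exists d. intros u v Hu Hv. pose proof (Hd u Hu) as He'.
      split; [exact (proj2 (sm_r M a psi hsm nil t u th v He')) |].
      split; [exact (proj2 (sm_ph M a psi hsm nil t u th v He')) |].
      split; [exact (proj2 (sm_r M a psi hsm (3%nat :: nil) t u th v He')) |].
      exact (proj2 (sm_ph M a psi hsm (1%nat :: nil) t u th v He')).
    + refine (cont_restr (fun q => snd (iter_pd (1%nat :: 3%nat :: nil) psi (fst (fst (fst q))) (snd (fst (fst q))) (snd (fst q)) (snd q)))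
         (t, r, th, ph) (fun u v => (t, u, th, v)) r ph _ eq_refl _).
      * exact ((fun h => proj1 (proj2 h)) (hsm (1%nat :: 3%nat :: nil) t r th ph He)).
      * ballt.
    + refine (cont_restr (fun q => snd (iter_pd (3%nat :: 1%nat :: nil) psi (fst (fst (fst q))) (snd (fst (fst q))) (snd (fst q)) (snd q)))
         (t, r, th, ph) (fun u v => (t, u, th, v)) r ph _ eq_refl _).
      * exact ((fun h => proj1 (proj2 h)) (hsm (3%nat :: 1%nat :: nil) t r th ph He)).
      * ballt.
Qed.

End Schw.

Lemma exC_scv (k : R -> R) (g : R -> C) x : ex_derive k x -> exC g x -> exC (fun y => sc (k y) (g y)) x.
Proof.
  intros Hk [H1 H2]. unfold sc, Cmult, RtoC; split; simpl.
  - apply (ex_derive_minus (fun y => k y * fst (g y)) (fun y => 0 * snd (g y))).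
    + apply (ex_derive_mult k (fun y => fst (g y))); assumption.
    + apply ex_derive_scal; assumption.
  - apply (ex_derive_plus (fun y => k y * snd (g y)) (fun y => 0 * fst (g y))).
    + apply (ex_derive_mult k (fun y => snd (g y))); assumption.
    + apply ex_derive_scal; assumption.
Qed.

Lemma CD_NF4v (k1 k2 k3 k4 : R -> R) (A B Cc D : R -> C) x :
  ex_derive k1 x -> ex_derive k2 x -> ex_derive k3 x -> ex_derive k4 x ->
  exC A x -> exC B x -> exC Cc x -> exC D x ->
  CD (fun y => NF4 (k1 y) (k2 y) (k3 y) (k4 y) (A y) (B y) (Cc y) (D y)) x =
  Cplus (NF4 (Derive k1 x) (Derive k2 x) (Derive k3 x) (Derive k4 x) (A x) (B x) (Cc x) (D x))
        (NF4 (k1 x) (k2 x) (k3 x) (k4 x) (CD A x) (CD B x) (CD Cc x) (CD D x)).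
Proof.
  intros h1 h2 h3 h4 HA HB HC HD. unfold NF4.
  assert (E1 := exC_scv _ _ _ h1 HA).
  assert (E2 := exC_scv _ _ _ h2 HB).
  assert (E3 := exC_scv _ _ _ h3 HC).
  assert (E4 := exC_scv _ _ _ h4 HD).
  assert (E34 := exC_plus _ _ _ E3 E4).
  assert (E234 := exC_plus _ _ _ E2 E34).
  rewrite (CD_plus _ _ _ E1 E234).
  rewrite (CD_plus _ _ _ E2 E34).
  rewrite (CD_plus _ _ _ E3 E4).
  rewrite !CD_scv by assumption.
  destruct (A x), (B x), (Cc x), (D x), (CD A x), (CD B x), (CD Cc x), (CD D x).
  unfold Cplus, sc, Cmult, RtoC; simpl. f_equal; ring.
Qed.

Lemma is_derive_Rc (M a : R) (s : Z) (Rf : R -> R) r Rd :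
  (-2 <= s <= 2)%Z -> 0 < Delta M a r -> 0 < r ^ 2 + a ^ 2 ->
  is_derive Rf r Rd ->
  is_derive (fun y => Rf y * cf M a s y) r (Rd * cf M a s r + Rf r * (cf M a s r * gf M a (IZR s) r)).
Proof.
  intros hs hD hL H.
  exact (is_derive_mult _ _ _ _ _ H (c_der M a s r hs hD hL) Rmult_comm).
Qed.

Lemma der_aL (a r : R) : 0 < r ^ 2 + a ^ 2 ->
  is_derive (fun y => a / (y ^ 2 + a ^ 2)) r (- 2 * a * r / (r ^ 2 + a ^ 2) ^ 2).
Proof. intros hL. auto_derive; [simpl; lra | field; simpl; lra]. Qed.

Lemma der_mu (M a r : R) : 0 < r ^ 2 + a ^ 2 ->
  is_derive (fun y => mu M a y) r (((2 * r - 2 * M) * (r ^ 2 + a ^ 2) - Delta M a r * (2 * r)) / (r ^ 2 + a ^ 2) ^ 2).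
Proof. intros hL. unfold mu, Delta. auto_derive; [simpl; lra | field; simpl; lra]. Qed.

Lemma der_mug (M a S r : R) : 0 < Delta M a r -> 0 < r ^ 2 + a ^ 2 ->
  is_derive (fun y => mu M a y * gf M a S y) r
   (((2 * r - 2 * M) * (r ^ 2 + a ^ 2) - Delta M a r * (2 * r)) / (r ^ 2 + a ^ 2) ^ 2 * gf M a S r
    + mu M a r * (- S * (2 / Delta M a r - (2 * r - 2 * M) ^ 2 / Delta M a r ^ 2)
                  + (2 * S + 1) * (1 / (r ^ 2 + a ^ 2) - 2 * r ^ 2 / (r ^ 2 + a ^ 2) ^ 2))).
Proof.
  intros hD hL. unfold mu, gf, Delta in *.
  auto_derive; [repeat split; simpl; lra | field; split; simpl; lra].
Qed.

Lemma der_Delta (M a r : R) : is_derive (fun y => Delta M a y) r (2 * r - 2 * M).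
Proof. unfold Delta. auto_derive; [exact I | ring]. Qed.

Section Main.
Variables (M a : R) (s : Z) (psi : F4).
Hypotheses (hM : 0 < M) (ha : Rabs a < M) (hs : (-2 <= s <= 2)%Z) (hsm : smooth_ext M a psi).

Local Notation P := (Phi0 M a s psi).
Local Notation c := (cf M a s).
Local Notation S := (IZR s).

Lemma P_val t r th ph : P t r th ph = sc (c r) (psi t r th ph).
Proof. reflexivity. Qed.

Lemma P_t t r th ph : dt P t r th ph = sc (c r) (dt psi t r th ph).
Proof. exact (CD_sc (c r) (fun x => psi x r th ph) t). Qed.

Lemma P_ph t r th ph : dph P t r th ph = sc (c r) (dph psi t r th ph).
Proof. exact (CD_sc (c r) (fun x => psi t r th x) ph). Qed.

Lemma P_th t r th ph : dth P t r th ph = sc (c r) (dth psi t r th ph).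
Proof. exact (CD_sc (c r) (fun x => psi t r x ph) th). Qed.

Lemma P_r t r th ph : exterior M a r th ->
  dr P t r th ph = Cplus (sc (c r * gf M a S r) (psi t r th ph)) (sc (c r) (dr psi t r th ph)).
Proof.
  intros He. destruct (ext_pos M a r th hM ha He) as [hD [hL _]].
  transitivity (CD (fun x => sc (c x) (psi t x th ph)) r); [reflexivity |].
  rewrite CD_scv.
  - rewrite (is_derive_unique _ _ _ (c_der M a s r hs hD hL)). reflexivity.
  - eexists; exact (c_der M a s r hs hD hL).
  - exact (sm_r M a psi hsm nil t r th ph He).
Qed.

Definition k1 := cf M a s.
Definition k2 := fun y => a / (y ^ 2 + a ^ 2) * cf M a s y.
Definition k3 := fun y => mu M a y * gf M a (IZR s) y * cf M a s y.
Definition k4 := fun y => mu M a y * cf M a s y.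

Lemma V_alg (L cc g mm : R) (A B Cc D : C) : L <> 0 ->
  Cplus (sc (/ L) (Cplus (sc L (sc cc A)) (sc a (sc cc B))))
        (sc mm (Cplus (sc (cc * g) Cc) (sc cc D))) =
  NF4 cc (a / L * cc) (mm * g * cc) (mm * cc) A B Cc D.
Proof.
  intros hL. destruct A, B, Cc, D. unfold NF4, sc, Cplus, Cmult, RtoC; simpl.
  f_equal; field; exact hL.
Qed.

Lemma V_NF t r th ph : exterior M a r th ->
  Vop M a P t r th ph = NF4 (k1 r) (k2 r) (k3 r) (k4 r)
     (dt psi t r th ph) (dph psi t r th ph) (psi t r th ph) (dr psi t r th ph).
Proof.
  intros He. destruct (ext_pos M a r th hM ha He) as [hD [hL _]].
  unfold Vop. rewrite P_t, P_ph, P_r by exact He.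
  unfold k1, k2, k3, k4. apply V_alg. lra.
Qed.

Lemma dtV t r th ph : exterior M a r th ->
  dt (Vop M a P) t r th ph = NF4 (k1 r) (k2 r) (k3 r) (k4 r)
     (dt (dt psi) t r th ph) (dt (dph psi) t r th ph) (dt psi t r th ph) (dt (dr psi) t r th ph).
Proof.
  intros He.
  transitivity (CD (fun x => Vop M a P x r th ph) t); [reflexivity |].
  rewrite (CD_ext _ (fun x => NF4 (k1 r) (k2 r) (k3 r) (k4 r)
     (dt psi x r th ph) (dph psi x r th ph) (psi x r th ph) (dr psi x r th ph)))
    by (intros; apply V_NF; exact He).
  rewrite CD_NF4c; [reflexivity | ..].
  - exact (sm_t M a psi hsm (0%nat :: nil) t r th ph He).
  - exact (sm_t M a psi hsm (3%nat :: nil) t r th ph He).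
  - exact (sm_t M a psi hsm nil t r th ph He).
  - exact (sm_t M a psi hsm (1%nat :: nil) t r th ph He).
Qed.

Lemma dphV t r th ph : exterior M a r th ->
  dph (Vop M a P) t r th ph = NF4 (k1 r) (k2 r) (k3 r) (k4 r)
     (dph (dt psi) t r th ph) (dph (dph psi) t r th ph) (dph psi t r th ph) (dph (dr psi) t r th ph).
Proof.
  intros He.
  transitivity (CD (fun x => Vop M a P t r th x) ph); [reflexivity |].
  rewrite (CD_ext _ (fun x => NF4 (k1 r) (k2 r) (k3 r) (k4 r)
     (dt psi t r th x) (dph psi t r th x) (psi t r th x) (dr psi t r th x)))
    by (intros; apply V_NF; exact He).
  rewrite CD_NF4c; [reflexivity | ..].
  - exact (sm_ph M a psi hsm (0%nat :: nil) t r th ph He).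
  - exact (sm_ph M a psi hsm (3%nat :: nil) t r th ph He).
  - exact (sm_ph M a psi hsm nil t r th ph He).
  - exact (sm_ph M a psi hsm (1%nat :: nil) t r th ph He).
Qed.

Lemma drV t r th ph : exterior M a r th ->
  dr (Vop M a P) t r th ph =
  Cplus (NF4 (Derive k1 r) (Derive k2 r) (Derive k3 r) (Derive k4 r)
          (dt psi t r th ph) (dph psi t r th ph) (psi t r th ph) (dr psi t r th ph))
        (NF4 (k1 r) (k2 r) (k3 r) (k4 r)
          (dr (dt psi) t r th ph) (dr (dph psi) t r th ph) (dr psi t r th ph) (dr (dr psi) t r th ph)).
Proof.
  intros He. destruct (ext_pos M a r th hM ha He) as [hD [hL _]].
  transitivity (CD (fun x => Vop M a P t x th ph) r); [reflexivity |].
  rewrite (CD_ext_loc _ (fun x => NF4 (k1 x) (k2 x) (k3 x) (k4 x)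
     (dt psi t x th ph) (dph psi t x th ph) (psi t x th ph) (dr psi t x th ph))).
  2:{ destruct (ext_loc2_r M a r th He) as [d Hd]. exists d. intros y Hy.
      apply V_NF. apply Hd. exact Hy. }
  rewrite CD_NF4v; [reflexivity | ..].
  - eexists; exact (c_der M a s r hs hD hL).
  - eexists; exact (is_derive_Rc M a s _ r _ hs hD hL (der_aL a r hL)).
  - eexists; exact (is_derive_Rc M a s _ r _ hs hD hL (der_mug M a (IZR s) r hD hL)).
  - eexists; exact (is_derive_Rc M a s _ r _ hs hD hL (der_mu M a r hL)).
  - exact (sm_r M a psi hsm (0%nat :: nil) t r th ph He).
  - exact (sm_r M a psi hsm (3%nat :: nil) t r th ph He).
  - exact (sm_r M a psi hsm nil t r th ph He).
  - exact (sm_r M a psi hsm (1%nat :: nil) t r th ph He).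
Qed.

Lemma dtdt_P t r th ph : dt (dt P) t r th ph = sc (c r) (dt (dt psi) t r th ph).
Proof.
  transitivity (CD (fun x => dt P x r th ph) t); [reflexivity |].
  rewrite (CD_ext _ (fun x => sc (c r) (dt psi x r th ph))) by (intros; apply P_t).
  apply CD_sc.
Qed.

Lemma dtdph_P t r th ph : dt (dph P) t r th ph = sc (c r) (dt (dph psi) t r th ph).
Proof.
  transitivity (CD (fun x => dph P x r th ph) t); [reflexivity |].
  rewrite (CD_ext _ (fun x => sc (c r) (dph psi x r th ph))) by (intros; apply P_ph).
  apply CD_sc.
Qed.

Lemma eth_alg1 (cc k m : R) (A B Cc : C) :
  Cplus (Cminus (sc cc A) (Cmult Ci (sc k (sc cc B)))) (sc m (sc cc Cc)) =
  sc cc (Cplus (Cminus A (Cmult Ci (sc k B))) (sc m Cc)).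
Proof. destruct A, B, Cc. unfold Cminus, sc, Cplus, Copp, Cmult, Ci, RtoC; simpl. f_equal; ring. Qed.

Lemma eth_alg2 (cc k m : R) (A B Cc : C) :
  Cminus (Cplus (sc cc A) (Cmult Ci (sc k (sc cc B)))) (sc m (sc cc Cc)) =
  sc cc (Cminus (Cplus A (Cmult Ci (sc k B))) (sc m Cc)).
Proof. destruct A, B, Cc. unfold Cminus, sc, Cplus, Copp, Cmult, Ci, RtoC; simpl. f_equal; ring. Qed.

Lemma ethp_P (S0 : R) t r th ph : eth' S0 P t r th ph = sc (c r) (eth' S0 psi t r th ph).
Proof. unfold eth'. rewrite P_th, P_ph, P_val. apply eth_alg1. Qed.

Lemma ethethp_P (S0 : R) t r th ph : ethethp S0 P t r th ph = sc (c r) (ethethp S0 psi t r th ph).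
Proof.
  unfold ethethp, eth.
  assert (E1 : dth (eth' S0 P) t r th ph = sc (c r) (dth (eth' S0 psi) t r th ph)).
  { transitivity (CD (fun x => eth' S0 P t r x ph) th); [reflexivity |].
    rewrite (CD_ext _ (fun x => sc (c r) (eth' S0 psi t r x ph))) by (intros; apply ethp_P).
    apply CD_sc. }
  assert (E2 : dph (eth' S0 P) t r th ph = sc (c r) (dph (eth' S0 psi) t r th ph)).
  { transitivity (CD (fun x => eth' S0 P t r th x) ph); [reflexivity |].
    rewrite (CD_ext _ (fun x => sc (c r) (eth' S0 psi t r th x))) by (intros; apply ethp_P).
    apply CD_sc. }
  rewrite E1, E2, ethp_P. apply eth_alg2.
Qed.

Lemma teuk_dr t r th ph : exterior M a r th ->
  dr (fun t' r' th' ph' => sc (Delta M a r') (dr psi t' r' th' ph')) t r th ph =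
  Cplus (sc (2 * r - 2 * M) (dr psi t r th ph)) (sc (Delta M a r) (dr (dr psi) t r th ph)).
Proof.
  intros He.
  transitivity (CD (fun x => sc (Delta M a x) (dr psi t x th ph)) r); [reflexivity |].
  rewrite CD_scv.
  - rewrite (is_derive_unique (Delta M a) r _ (der_Delta M a r)). reflexivity.
  - eexists; exact (der_Delta M a r).
  - exact (sm_r M a psi hsm (1%nat :: nil) t r th ph He).
Qed.

End Main.

Lemma sc_pair k x y : sc k (x, y) = (k * x, k * y).
Proof. unfold sc, Cmult, RtoC; cbn [fst snd]; f_equal; ring. Qed.
Lemma Cplus_pair x1 y1 x2 y2 : Cplus (x1, y1) (x2, y2) = (x1 + x2, y1 + y2).
Proof. reflexivity. Qed.
Lemma Cminus_pair x1 y1 x2 y2 : Cminus (x1, y1) (x2, y2) = (x1 - x2, y1 - y2).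
Proof. reflexivity. Qed.
Lemma Copp_pair x1 y1 : Copp (x1, y1) = (- x1, - y1).
Proof. reflexivity. Qed.
Lemma Ci_pair x1 y1 : Cmult Ci (x1, y1) = (- y1, x1).
Proof. unfold Cmult, Ci; cbn [fst snd]; f_equal; ring. Qed.

Lemma comb (A Lh Rh k : R) : A = 0 -> Lh - Rh - k * A = 0 -> Lh = Rh.
Proof. intros H1 H2. rewrite H1 in H2. lra. Qed.

Theorem proposition3p11 (M a : R) (s : Z) (psi : F4)
  (hM : 0 < M) (ha : Rabs a < M)
  (hs : (-2 <= s <= 2)%Z)
  (hsmooth : smooth_ext M a psi)
  (hteuk : forall t r th ph, exterior M a r th -> teukolsky_at M a (IZR s) psi t r th ph) :
  forall t r th ph, exterior M a r th ->
    let S := IZR s in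
    let P := Phi0 M a s psi in
    Box_s M a S P t r th ph =
    Cminus (Cminus
      (sc (2 * S * (r ^ 3 - 3 * M * r ^ 2 + a ^ 2 * r + a ^ 2 * M) / (r ^ 2 + a ^ 2) ^ 2)
          (calVhat M a P t r th ph))
      (sc (2 * (2 * S + 1) * a * r / (r ^ 2 + a ^ 2)) (dph P t r th ph)))
      (sc (2 * S - (2 * S + 1) * (2 * (S + 1) * M * r ^ 3 + a ^ 2 * r ^ 2
                                  - 2 * (S + 2) * a ^ 2 * M * r + a ^ 4) / (r ^ 2 + a ^ 2) ^ 2)
          (P t r th ph)).
Proof.
  intros t r th ph He. cbv zeta.
  destruct (ext_pos M a r th hM ha He) as [hD [hL hr]].
  pose proof (hteuk t r th ph He) as HT. unfold teukolsky_at in HT.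
  rewrite teuk_dr in HT by assumption.
  unfold Yop in HT.
  unfold Box_s, calVhat, Vhat, Yop.
  rewrite dtV by assumption.
  rewrite dphV by assumption.
  rewrite drV by assumption.
  rewrite V_NF by assumption.
  rewrite ethethp_P, dtdph_P, dtdt_P, P_t, P_ph, P_val.
  rewrite <- (schw_tph M a psi hsmooth t r th ph He).
  rewrite (schw_tr M a psi hsmooth t r th ph He).
  rewrite (schw_rph M a psi hsmooth t r th ph He).
  unfold k1, k2, k3, k4.
  rewrite (is_derive_unique _ _ _ (c_der M a s r hs hD hL)).
  assert (E2 : Derive (fun y : R => a / (y ^ 2 + a ^ 2) * cf M a s y) r =
     - 2 * a * r / (r ^ 2 + a ^ 2) ^ 2 * cf M a s r + a / (r ^ 2 + a ^ 2) * (cf M a s r * gf M a (IZR s) r)).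
  { apply is_derive_unique. exact (is_derive_Rc M a s _ r _ hs hD hL (der_aL a r hL)). }
  assert (E3 : Derive (fun y : R => mu M a y * gf M a (IZR s) y * cf M a s y) r =
     (((2 * r - 2 * M) * (r ^ 2 + a ^ 2) - Delta M a r * (2 * r)) / (r ^ 2 + a ^ 2) ^ 2 * gf M a (IZR s) r
    + mu M a r * (- (IZR s) * (2 / Delta M a r - (2 * r - 2 * M) ^ 2 / Delta M a r ^ 2)
                  + (2 * (IZR s) + 1) * (1 / (r ^ 2 + a ^ 2) - 2 * r ^ 2 / (r ^ 2 + a ^ 2) ^ 2)))
     * cf M a s r + mu M a r * gf M a (IZR s) r * (cf M a s r * gf M a (IZR s) r)).
  { apply is_derive_unique. exact (is_derive_Rc M a s _ r _ hs hD hL (der_mug M a (IZR s) r hD hL)). }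
  assert (E4 : Derive (fun y : R => mu M a y * cf M a s y) r =
     ((2 * r - 2 * M) * (r ^ 2 + a ^ 2) - Delta M a r * (2 * r)) / (r ^ 2 + a ^ 2) ^ 2 * cf M a s r
     + mu M a r * (cf M a s r * gf M a (IZR s) r)).
  { apply is_derive_unique. exact (is_derive_Rc M a s _ r _ hs hD hL (der_mu M a r hL)). }
  rewrite E2, E3, E4. clear E2 E3 E4.
  unfold NF4.
  revert HT.
  generalize (cf M a s r) as cc.
  generalize (psi t r th ph) as A0.
  generalize (dt psi t r th ph) as A1.
  generalize (dph psi t r th ph) as A2.
  generalize (dr psi t r th ph) as A3.
  generalize (dt (dt psi) t r th ph) as A4.
  generalize (dt (dph psi) t r th ph) as A5.
  generalize (dph (dph psi) t r th ph) as A6.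
  generalize (dr (dt psi) t r th ph) as A7.
  generalize (dph (dr psi) t r th ph) as A8.
  generalize (dr (dr psi) t r th ph) as A9.
  generalize (ethethp (IZR s) psi t r th ph) as A10.
  intros [x10 y10] [x9 y9] [x8 y8] [x7 y7] [x6 y6] [x5 y5] [x4 y4] [x3 y3] [x2 y2] [x1 y1] [x0 y0] cc HT.
  clear hteuk hsmooth He.
  repeat rewrite ?sc_pair, ?Cplus_pair, ?Cminus_pair, ?Copp_pair, ?Ci_pair in HT.
  repeat rewrite ?sc_pair, ?Cplus_pair, ?Cminus_pair, ?Copp_pair, ?Ci_pair.
  unfold RtoC in HT.
  injection HT as HT1 HT2.
  unfold mu, gf in *. unfold Delta in *.
  assert (hD' : r ^ 2 - 2 * M * r + a ^ 2 <> 0) by lra.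
  assert (hL' : r ^ 2 + a ^ 2 <> 0) by lra.
  f_equal.
  - apply (comb _ _ _ cc HT1). field. split; assumption.
  - apply (comb _ _ _ cc HT2). field. split; assumption.
Qed.
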